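(* Let $n \ge 3$. The commutator subgroup $TW_n'$ has the following presentation. Generators: $\beta(S;j)$ for every $j \in \{1,\dots,n-2\}$ and every (possibly empty) subset $S \subseteq \{1,\dots,j-1\}$. Defining relations: for every $t \in \{1,\dots,n-2\}$, every $j$ with $1 \le j \le t-2$, and every subset $S \subseteq \{1,\dots,t-1\}$: (i) if $j \in S$ and $j+1 \notin S$, then $\beta(S;t) = \beta(S\setminus\{j\};t)$; (ii) if $j \in S$ and $j+1 \in S$, then, writing $S_{<j} = \{i \in S : i < j\}$, $$\beta(S;t) = \beta(S_{<j};j)^{-1}\,\beta(S\setminus\{j\};t)\,\beta(S_{<j};j).$$ Here the generator $\beta(S;j)$ corresponds to the element of $TW_n$ defined in the context.
   Context: For $n \ge 2$, the twin group $TW_n$ is the group with generators $\tau_1,\dots,\tau_{n-1}$ and defining relations $\tau_i^2=1$ for all $i$, and $\tau_i\tau_j=\tau_j\tau_i$ whenever $|i-j|>1$. $G'$ denotes the commutator subgroup of a group $G$. For $1 \le j \le n-2$ and a subset $S=\{i_1<i_2<\dots<i_s\} \subseteq \{1,\dots,j-1\}$ (possibly empty), define $$\beta(S;j) := \tau_{i_1}\tau_{i_2}\cdots\tau_{i_s}\,(\tau_{j+1}\tau_j\tau_{j+1}\tau_j)\,\tau_{i_s}\cdots\tau_{i_2}\tau_{i_1}\in TW_n,$$ so that $\beta(\emptyset;j)=\tau_{j+1}\tau_j\tau_{j+1}\tau_j$. *)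

(* Defs.v *)
(* Groups given by presentations are modelled concretely as
   words in generators and inverses modulo the congruence generated by free
   cancellation and the defining relations. *)
From mathcomp Require Import all_boot.
Set Implicit Arguments. Unset Strict Implicit. Unset Printing Implicit Defensive.

(* A word: a letter (a, false) is a, (a, true) is a^-1. *)
Definition word (A : Type) := seq (A * bool).

Definition winv (A : Type) (w : word A) : word A :=
  rev (map (fun p => (p.1, ~~ p.2)) w).

Inductive geqv (A : Type) (R : word A -> word A -> Prop) : word A -> word A -> Prop :=
| ge_refl w : geqv R w w
| ge_sym u v : geqv R u v -> geqv R v u
| ge_trans u v w : geqv R u v -> geqv R v w -> geqv R u w
| ge_cat u u' v v' : geqv R u u' -> geqv R v v' -> geqv R (u ++ v) (u' ++ v')
| ge_cancel (a : A) (b : bool) : geqv R [:: (a, b); (a, ~~ b)] [::]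
| ge_rel u v : R u v -> geqv R u v.

Definition tw_gen (n : nat) := {i : nat | (0 < i < n)%N}.

Definition RTW (n : nat) (u v : word (tw_gen n)) : Prop :=
  (exists i : tw_gen n, u = [:: (i, false); (i, false)] /\ v = [::]) \/
  (exists i j : tw_gen n,
      ((val i).+1 < val j \/ (val j).+1 < val i)%N /\
      u = [:: (i, false); (j, false)] /\ v = [:: (j, false); (i, false)]).

(* the word tau_k (k is always a valid index where used) *)
Definition tau (n k : nat) : word (tw_gen n) :=
  match insub k with Some x => [:: (x, false)] | None => [::] end.

Definition wcomm (A : Type) (x y : word A) : word A :=
  winv x ++ winv y ++ x ++ y.

Definition in_commutator (n : nat) (u : word (tw_gen n)) : Prop :=
  exists ps : seq (word (tw_gen n) * word (tw_gen n)),
    geqv (@RTW n) u (flatten (map (fun p => wcomm p.1 p.2) ps)).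

Definition bgen_ok (n : nat) (p : seq nat * nat) : bool :=
  [&& (0 < p.2)%N, (p.2 <= n.-2)%N, sorted ltn p.1 &
      all (fun i => (0 < i < p.2)%N) p.1].

Definition bgen (n : nat) := {p : seq nat * nat | bgen_ok n p}.

Definition beta_word (n : nat) (S : seq nat) (j : nat) : word (tw_gen n) :=
  flatten (map (tau n) S) ++ tau n j.+1 ++ tau n j ++ tau n j.+1 ++ tau n j
  ++ flatten (map (tau n) (rev S)).

Definition beta (n : nat) (g : bgen n) : word (tw_gen n) :=
  beta_word n (val g).1 (val g).2.

Definition ev (n : nat) (w : word (bgen n)) : word (tw_gen n) :=
  flatten (map (fun p => if p.2 then winv (beta p.1) else beta p.1) w).

Definition RB (n : nat) (u v : word (bgen n)) : Prop :=
  exists (g g' h : bgen n) (j : nat),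
    let S := (val g).1 in let t := (val g).2 in
    [/\ (0 < j)%N, (j.+2 <= t)%N,
        val g' = (filter (predC1 j) S, t),
        val h = (filter (fun i => (i < j)%N) S, j) &
        ((j \in S /\ j.+1 \notin S /\ u = [:: (g, false)] /\ v = [:: (g', false)])
         \/
         (j \in S /\ j.+1 \in S /\ u = [:: (g, false)] /\
          v = [:: (h, true); (g', false); (h, false)]))].

(* Main.v *)
Require Import Defs.
From mathcomp Require Import all_boot.
From Stdlib Require Import Setoid Morphisms FunctionalExtensionality.
From mathcomp Require Import zify.
From Stdlib Require Import Lia.
Set Implicit Arguments. Unset Strict Implicit. Unset Printing Implicit Defensive.

Section G.
Variables (A : Type) (R : word A -> word A -> Prop).
Lemma geqv_catP : Proper (geqv R ==> geqv R ==> geqv R) (@cat (A * bool)).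
Proof. move=> u u' H v v' H'; exact: ge_cat. Qed.
Lemma geqv_consP a : Proper (geqv R ==> geqv R) (@cons (A * bool) a).
Proof. move=> u u' H; have := ge_cat (ge_refl R [:: a]) H; done. Qed.
End G.

Add Parametric Relation (A : Type) (R : word A -> word A -> Prop) : (word A) (geqv R)
  reflexivity proved by (@ge_refl A R)
  symmetry proved by (@ge_sym A R)
  transitivity proved by (@ge_trans A R) as geqv_rel.
Existing Instance geqv_catP.
Existing Instance geqv_consP.
#[export] Hint Resolve ge_refl : core.

Section G2.
Variables (A : Type) (R : word A -> word A -> Prop).
Local Notation "u === v" := (geqv R u v) (at level 70).

Lemma winv_cat (u v : word A) : winv (u ++ v) = winv v ++ winv u.
Proof. by rewrite /winv map_cat rev_cat. Qed.

Lemma winvK (u : word A) : winv (winv u) = u.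
Proof. rewrite /winv map_rev revK -map_comp; elim: u => [|[a b] u IH] //=; by rewrite negbK IH. Qed.

Lemma winv_cons (a : A * bool) (u : word A) : winv (a :: u) = winv u ++ [:: (a.1, ~~ a.2)].
Proof. by rewrite -cat1s winv_cat. Qed.

Lemma cancelw (a : A) b (w : word A) : (a, b) :: (a, ~~ b) :: w === w.
Proof.
have -> : (a, b) :: (a, ~~ b) :: w = [:: (a, b); (a, ~~ b)] ++ w by [].
by rewrite (ge_cancel R a b).
Qed.

Lemma cat_winv (u : word A) : u ++ winv u === [::].
Proof.
elim: u => [|[a b] u IH] //=.
rewrite winv_cons /= catA IH /=; exact: ge_cancel.
Qed.

Lemma winv_catw (u : word A) : winv u ++ u === [::].
Proof. by have := cat_winv (winv u); rewrite winvK. Qed.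

Lemma cat_winvw (u w : word A) : u ++ (winv u ++ w) === w.
Proof. by rewrite catA cat_winv. Qed.

Lemma winv_catww (u w : word A) : winv u ++ (u ++ w) === w.
Proof. by rewrite catA winv_catw. Qed.

Lemma inv_letter (x : A) (w : word A) :
  [:: (x, false)] === w -> [:: (x, true)] === winv w.
Proof.
move=> H.
transitivity ([:: (x, true)] ++ (w ++ winv w)); first by rewrite cat_winv cats0.
transitivity ([:: (x, true)] ++ ([:: (x, false)] ++ winv w)).
  by apply: ge_cat => //; apply: ge_cat => //; apply: ge_sym.
exact: (cancelw x true).
Qed.
End G2.

Definition far (a b : nat) := (a.+1 < b) || (b.+1 < a).

Section TW.
Variable n : nat.
Local Notation "u =t= v" := (geqv (@RTW n) u v) (at level 70).
Local Notation Ft S := (flatten (map (tau n) S)).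

Lemma tau_valid k (H : 0 < k < n) : tau n k = [:: (exist _ k H : tw_gen n, false)].
Proof. by rewrite /tau (insubT (fun k => 0 < k < n) H). Qed.

Lemma tau_invalid k : ~~ (0 < k < n) -> tau n k = [::].
Proof. by move=> H; rewrite /tau insubF //; apply/negbTE. Qed.

Lemma tau_val (x : tw_gen n) : tau n (val x) = [:: (x, false)].
Proof. by rewrite /tau valK. Qed.

Lemma letter (x : tw_gen n) b : [:: (x, b)] =t= tau n (val x).
Proof.
rewrite tau_val; case: b => //.
transitivity ([:: (x, true); (x, false); (x, false)]).
  have -> : [:: (x, true); (x, false); (x, false)] = [:: (x, true)] ++ [:: (x, false); (x, false)] by [].
  rewrite (ge_rel (R := @RTW n) (u := [:: (x, false); (x, false)]) (v := [::])) ?cats0 //.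
  by left; exists x.
exact: (cancelw _ x true).
Qed.

Lemma tauK k : tau n k ++ tau n k =t= [::].
Proof.
case H: (0 < k < n); last by rewrite tau_invalid ?H.
rewrite tau_valid; apply: ge_rel; left; by eexists.
Qed.

Lemma tauKw k w : tau n k ++ (tau n k ++ w) =t= w.
Proof. by rewrite catA tauK. Qed.

Lemma tauC a b : far a b -> tau n a ++ tau n b =t= tau n b ++ tau n a.
Proof.
move=> Hf.
case Ha: (0 < a < n); last by rewrite (tau_invalid (k := a)) ?Ha ?cats0.
case Hb: (0 < b < n); last by rewrite (tau_invalid (k := b)) ?Hb ?cats0.
rewrite (tau_valid Ha) (tau_valid Hb); apply: ge_rel; right.
exists (exist _ a Ha), (exist _ b Hb); split => //.
by case/orP: Hf => ->; [left|right].
Qed.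

Lemma tauCw a b w : far a b -> tau n a ++ (tau n b ++ w) =t= tau n b ++ (tau n a ++ w).
Proof. by move=> H; rewrite !catA tauC. Qed.

Lemma FtC a S w : all (far a) S -> tau n a ++ (Ft S ++ w) =t= Ft S ++ (tau n a ++ w).
Proof.
elim: S => [|b S IH] //= /andP [Hb HS].
by rewrite -!catA tauCw // IH.
Qed.

Lemma FtC2 a S : all (far a) S -> tau n a ++ Ft S =t= Ft S ++ tau n a.
Proof. by move=> H; have := FtC [::] H; rewrite !cats0. Qed.

Lemma Ft_rev_cons a S : Ft (rev (a :: S)) = Ft (rev S) ++ tau n a.
Proof. by rewrite rev_cons -cats1 map_cat flatten_cat /= cats0. Qed.

Lemma FtrevK S w : Ft (rev S) ++ (Ft S ++ w) =t= w.
Proof.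
elim: S w => [|a S IH] w //=.
by rewrite Ft_rev_cons -!catA tauKw IH.
Qed.

Lemma winv_tau k : winv (tau n k) =t= tau n k.
Proof.
case H: (0 < k < n); last by rewrite tau_invalid ?H.
rewrite tau_valid /winv /=; have := letter (exist _ k H) true; by rewrite tau_val.
Qed.

Lemma winv_Ft S : winv (Ft S) =t= Ft (rev S).
Proof.
elim: S => [|a S IH] //=.
by rewrite winv_cat Ft_rev_cons IH winv_tau.
Qed.

Lemma winv_beta S j :
  winv (beta_word n S j) =t=
  Ft S ++ tau n j ++ tau n j.+1 ++ tau n j ++ tau n j.+1 ++ Ft (rev S).
Proof.
rewrite /beta_word !winv_cat !winv_tau winv_Ft revK !winv_Ft.
by rewrite -!catA.
Qed.
End TW.

Lemma sorted_split (S : seq nat) j : sorted ltn S -> j \in S ->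
  exists A B, S = A ++ j :: B /\ all (fun x => x < j) A /\ all (fun x => j < x) B.
Proof.
move=> Hs Hj; case/splitPr: Hj Hs => A B. rewrite (sorted_pairwise ltn_trans) pairwise_cat /= => /and3P [H1 _ /andP [H2 _]].
exists A, B; split => //; split => //.
apply/allP => x Hx; move/allrelP: H1 => H1; exact: (H1 x j Hx (mem_head _ _)).
Qed.

Lemma sorted_cons_all (S : seq nat) j : sorted ltn (j :: S) -> all (fun x => j < x) S.
Proof. by rewrite (sorted_pairwise ltn_trans) /= => /andP []. Qed.

Lemma filter_all_id (T : Type) (p : pred T) s : all p s -> filter p s = s.
Proof. by move/all_filterP. Qed.

Section Part1.
Variable n : nat.
Local Notation "u =t= v" := (geqv (@RTW n) u v) (at level 70).
Local Notation Ft S := (flatten (map (tau n) S)).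

Lemma Ft_cat S1 S2 : Ft (S1 ++ S2) = Ft S1 ++ Ft S2.
Proof. by rewrite map_cat flatten_cat. Qed.

Lemma relI S t j : sorted ltn S -> j \in S -> j.+1 \notin S -> j.+2 <= t ->
  beta_word n S t =t= beta_word n (filter (predC1 j) S) t.
Proof.
move=> Hs Hj Hj1 Ht.
have [A [B [ES [HA HB]]]] := sorted_split Hs Hj.
have HB' : all (fun x => j.+1 < x) B.
  apply/allP => x Hx; have := allP HB x Hx; rewrite leq_eqVlt => /orP [/eqP E|//].
  by move: Hj1; rewrite ES mem_cat inE E Hx !orbT.
have Hf : filter (predC1 j) S = A ++ B.
  have PA : all (predC1 j) A.
    by apply/allP => x Hx /=; have := allP HA x Hx; rewrite neq_ltn => ->.
  have PB : all (predC1 j) B.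
    by apply/allP => x Hx /=; have := allP HB x Hx; rewrite neq_ltn => ->; rewrite orbT.
  by rewrite ES filter_cat /= eqxx /= !filter_all_id.
have FB : all (far j) B by apply/allP => x Hx; rewrite /far (allP HB' x Hx).
have FBr : all (far j) (rev B) by rewrite all_rev.
have Ft1 : far j t.+1 by rewrite /far; apply/orP; left; apply: leq_trans Ht _.
have Ft0 : far j t by rewrite /far; apply/orP; left.
rewrite Hf ES /beta_word !rev_cat /= rev_cons -cats1 !Ft_cat /= !cats0 -!catA.
rewrite (FtC _ FB) (tauCw _ Ft1) (tauCw _ Ft0) (tauCw _ Ft1) (tauCw _ Ft0).
by rewrite (FtC _ FBr) tauKw.
Qed.

Lemma relII S t j : sorted ltn S -> j \in S -> j.+1 \in S -> j.+2 <= t ->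
  beta_word n S t =t=
  winv (beta_word n (filter (fun i => i < j) S) j) ++
  beta_word n (filter (predC1 j) S) t ++ beta_word n (filter (fun i => i < j) S) j.
Proof.
move=> Hs Hj Hj1 Ht.
have [A [B0 [ES [HA HB0]]]] := sorted_split Hs Hj.
have HsB0 : sorted ltn (j :: B0).
  by move: Hs; rewrite ES => /cat_sorted2 [].
have Hj1B0 : j.+1 \in B0.
  move: Hj1; rewrite ES mem_cat inE (gtn_eqF (ltnSn j)) /= => /orP [Ha|//].
  by have := allP HA _ Ha; rewrite ltnNge leqnSn.
case: B0 HsB0 HB0 Hj1B0 ES => [//|b B] HsB0 HB0 Hj1B0 ES.
have Hb : b = j.+1.
  move: Hj1B0; rewrite inE => /orP [/eqP ->//|HjB].
  have Hbj : j < b by move: HB0 => /= /andP [].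
  move: HsB0 => /= /andP [_ /sorted_cons_all /allP /(_ _ HjB)].
  by rewrite ltnS leqNgt Hbj.
subst b.
have HB : all (fun x => j.+1 < x) B by move: HsB0 => /= /andP [_ /sorted_cons_all].
have E1 : filter (fun i => i < j) S = A.
  rewrite ES filter_cat /= ltnn ltnNge leqnSn /= filter_all_id //.
  rewrite (eq_in_filter (a2 := pred0)) ?filter_pred0 ?cats0 //.
  by move=> x Hx /=; have := allP HB x Hx; move=> H; apply/negbTE; rewrite -leqNgt; lia.
have E2 : filter (predC1 j) S = A ++ j.+1 :: B.
  have PA : all (predC1 j) A.
    by apply/allP => x Hx /=; have := allP HA x Hx; rewrite neq_ltn => ->.
  have PB : all (predC1 j) B.
    by apply/allP => x Hx /=; have := allP HB x Hx; rewrite neq_ltn => H; rewrite (ltn_trans _ H) ?orbT.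
  by rewrite ES filter_cat /= eqxx (gtn_eqF (ltnSn j)) /= !filter_all_id.
have FB : all (far j) B by apply/allP => x Hx; rewrite /far (allP HB x Hx).
have FBr : all (far j) (rev B) by rewrite all_rev.
have Ft1 : far j t.+1 by rewrite /far; apply/orP; left; apply: leq_trans Ht _.
have Ft0 : far j t by rewrite /far; apply/orP; left.
rewrite E1 E2 winv_beta.
rewrite ES /beta_word !rev_cat /= !rev_cons -!cats1 !Ft_cat /= !cats0 -!catA.
rewrite FtrevK tauKw FtrevK tauKw.
rewrite (FtC _ FB) (tauCw _ Ft1) (tauCw _ Ft0) (tauCw _ Ft1) (tauCw _ Ft0).
by rewrite (FtC _ FBr) tauKw.
Qed.
End Part1.

Section Part1b.
Variable n : nat.
Local Notation "u =t= v" := (geqv (@RTW n) u v) (at level 70).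

Lemma ev_cat (u v : word (bgen n)) : ev (u ++ v) = ev u ++ ev v.
Proof. by rewrite /ev map_cat flatten_cat. Qed.

Lemma part1 w1 w2 : geqv (@RB n) w1 w2 -> ev w1 =t= ev w2.
Proof.
elim => {w1 w2}.
- by [].
- by move=> u v _ H; apply: ge_sym.
- by move=> u v w _ H1 _ H2; apply: ge_trans H1 H2.
- by move=> u u' v v' _ H1 _ H2; rewrite !ev_cat; apply: ge_cat.
- move=> a [] /=; rewrite /ev /= cats0.
    by rewrite winv_catw.
  by rewrite cat_winv.
- move=> u v [g [g' [h [j H]]]]; move: H.
  case: g => [[S t] okg] /=.
  move=> [Hj0 Ht Hg' Hh Hc].
  have Hs : sorted ltn S by case/and4P: (okg).
  case: Hc => [[Hj [Hj1 [-> ->]]] | [Hj [Hj1 [-> ->]]]]; rewrite /ev /= /beta /= Hg' ?Hh /= !cats0.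
    exact: relI.
  exact: relII.
Qed.
End Part1b.

Section Conj.
Variables (A : Type) (R : word A -> word A -> Prop).
Local Notation "u === v" := (geqv R u v) (at level 70).

Lemma consw (a : A * bool) u v : u === v -> a :: u === a :: v.
Proof. by move=> H; rewrite H. Qed.

Lemma conjL x y h b : [:: (x, false)] === [:: (h, true); (y, false); (h, false)] ->
  [:: (h, true); (y, b)] === [:: (x, b); (h, true)].
Proof.
move=> H; case: b.
- have H' := inv_letter H; rewrite /winv /= in H'.
  have -> : [:: (x, true); (h, true)] = [:: (x, true)] ++ [:: (h, true)] by [].
  rewrite H' /=; apply: ge_sym; do 2 apply: consw; exact: (cancelw _ h false).
- have -> : [:: (x, false); (h, true)] = [:: (x, false)] ++ [:: (h, true)] by [].
  rewrite H /=; apply: ge_sym; do 2 apply: consw; exact: (cancelw _ h false).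
Qed.

Lemma conjR x y h b : [:: (x, false)] === [:: (h, true); (y, false); (h, false)] ->
  [:: (h, false); (x, b)] === [:: (y, b); (h, false)].
Proof.
move=> H; case: b.
- have H' := inv_letter H; rewrite /winv /= in H'.
  have -> : [:: (h, false); (x, true)] = [:: (h, false)] ++ [:: (x, true)] by [].
  by rewrite H' /= (cancelw _ h false).
- have -> : [:: (h, false); (x, false)] = [:: (h, false)] ++ [:: (x, false)] by [].
  by rewrite H /= (cancelw _ h false).
Qed.
End Conj.

Definition tog (T : nat -> bool) (i : nat) : nat -> bool := fun k => T k (+) (k == i).
Definition fin (T : nat -> bool) (s : seq nat) := foldl tog T s.

Lemma togK T a : tog (tog T a) a = T.
Proof. by apply: functional_extensionality => k; rewrite /tog addbK. Qed.

Lemma togC T a b : tog (tog T a) b = tog (tog T b) a.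
Proof. by apply: functional_extensionality => k; rewrite /tog addbAC. Qed.

Lemma filter_tog T i s : i \notin s -> filter (tog T i) s = filter T s.
Proof.
move=> Hi; apply: eq_in_filter => k Hk; rewrite /tog.
have -> : (k == i) = false by apply/eqP => E; move: Hi; rewrite -E Hk.
by rewrite addbF.
Qed.

Lemma notin_iota_low i m : m < i -> i \notin iota 1 m.
Proof. move=> H; rewrite mem_iota; apply/negP => /andP [H1 H2]; lia. Qed.

Lemma notin_iota_pred i : i \notin iota 1 i.-1.
Proof. rewrite mem_iota; apply/negP => /andP [H1 H2]; lia. Qed.

Section Rho.
Variable n : nat.

Definition sgen (T : nat -> bool) (i : nat) : word (bgen n) :=
  if T i.+1 then
    (if (insub (filter T (iota 1 i.-1), i) : option (bgen n)) is Some g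
     then [:: (g, T i)] else [::])
  else [::].

Fixpoint rho (T : nat -> bool) (s : seq nat) : word (bgen n) :=
  if s is i :: s' then sgen T i ++ rho (tog T i) s' else [::].

Definition idx (u : word (tw_gen n)) : seq nat := map (fun p => val p.1) u.

Lemma rho_cat T s1 s2 : rho T (s1 ++ s2) = rho T s1 ++ rho (fin T s1) s2.
Proof. by elim: s1 T => [|a s IH] T //=; rewrite IH catA. Qed.

Lemma fin_cat T s1 s2 : fin T (s1 ++ s2) = fin (fin T s1) s2.
Proof. by rewrite /fin foldl_cat. Qed.

Lemma ok_filter T j : 0 < j -> j <= n.-2 -> bgen_ok n (filter T (iota 1 j.-1), j).
Proof.
move=> H1 H2; rewrite /bgen_ok /= H1 H2 /= sorted_filter ?iota_ltn_sorted //=; last exact: ltn_trans.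
apply/allP => k; rewrite mem_filter mem_iota => /andP [_ /andP [Ha Hb]].
rewrite Ha /=; lia.
Qed.

Lemma mkgen T j : 0 < j -> j <= n.-2 ->
  exists g : bgen n, val g = (filter T (iota 1 j.-1), j).
Proof. by move=> H1 H2; exists (exist (bgen_ok n) _ (ok_filter T H1 H2)). Qed.

Lemma sgenE (T : nat -> bool) i : 0 < i -> i <= n.-2 -> T i.+1 ->
  exists g : bgen n, val g = (filter T (iota 1 i.-1), i) /\ sgen T i = [:: (g, T i)].
Proof.
move=> H1 H2 H3; rewrite /sgen H3.
rewrite (insubT (bgen_ok n) (ok_filter T H1 H2)).
by eexists; split; last reflexivity.
Qed.

Lemma sgen_nil (T : nat -> bool) i : ~~ [&& T i.+1, 0 < i & i <= n.-2] -> sgen T i = [::].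
Proof.
move=> H; rewrite /sgen; case E: (T i.+1) => //.
rewrite insubF //; apply/negbTE; move: H; rewrite E /= /bgen_ok /=.
by apply: contra => /and4P [-> -> _ _].
Qed.
End Rho.

Section Key.
Variable n : nat.
Local Notation "u =b= v" := (geqv (@RB n) u v) (at level 70).

Lemma sgen_cancel (T : nat -> bool) a : sgen n T a ++ sgen n (tog T a) a =b= [::].
Proof.
have E1 : tog T a a.+1 = T a.+1 by rewrite /tog (gtn_eqF (ltnSn a)) addbF.
have E2 : tog T a a = ~~ T a by rewrite /tog eqxx addbT.
have E3 : filter (tog T a) (iota 1 a.-1) = filter T (iota 1 a.-1)
  by apply: filter_tog; apply: notin_iota_pred.
rewrite /sgen E1 E2 E3; case: (T a.+1) => //.
case: insubP => [g _ _|_] //=.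
exact: ge_cancel.
Qed.

Lemma filter_pC1 (T : nat -> bool) i s : T i ->
  filter (tog T i) s = filter (predC1 i) (filter T s).
Proof.
move=> Hi; rewrite -filter_predI; apply: eq_filter => k /=; rewrite /tog.
case: eqP => [->|_] /=; first by rewrite Hi.
by rewrite addbF ?andbT.
Qed.

Lemma filter_pC1' (T : nat -> bool) i s : ~~ T i ->
  filter T s = filter (predC1 i) (filter (tog T i) s).
Proof.
move=> Hi; rewrite -filter_predI; apply: eq_filter => k /=; rewrite /tog.
case: eqP => [->|_] /=; first by rewrite (negbTE Hi).
by rewrite addbF ?andbT.
Qed.

Lemma filter_low (T : nat -> bool) i j : 0 < i -> i < j ->
  filter (fun k => k < i) (filter T (iota 1 j.-1)) = filter T (iota 1 i.-1).
Proof.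
move=> H1 H2.
have -> : iota 1 j.-1 = iota 1 i.-1 ++ iota i (j.-1 - i.-1).
  have E : i = 1 + i.-1 by lia.
  by rewrite [in iota i _]E -iotaD; congr iota; lia.
rewrite !filter_cat.
rewrite (eq_in_filter (a1 := fun k => k < i) (a2 := pred0) (s := filter T (iota i _))).
  rewrite filter_pred0 cats0 filter_all_id //.
  by apply/allP => k; rewrite mem_filter mem_iota => /andP [_ /andP [_ Hk]]; lia.
by move=> k; rewrite mem_filter mem_iota => /andP [_ /andP [Hk _]] /=; apply/negbTE; rewrite -leqNgt.
Qed.

Lemma sgen_comm (T : nat -> bool) i j : 0 < i -> i.+1 < j -> j < n ->
  sgen n T i ++ sgen n (tog T i) j =b= sgen n T j ++ sgen n (tog T j) i.
Proof.
move=> Hi Hij Hj.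
have Ei : sgen n (tog T j) i = sgen n T i.
  have E1 : tog T j i.+1 = T i.+1 by rewrite /tog (ltn_eqF Hij) addbF.
  have E2 : tog T j i = T i by rewrite /tog (ltn_eqF (ltn_trans (ltnSn i) Hij)) addbF.
  have E3 : filter (tog T j) (iota 1 i.-1) = filter T (iota 1 i.-1).
    by apply: filter_tog; apply: notin_iota_low; lia.
  by rewrite /sgen E1 E2 E3.
rewrite Ei.
have Hi2 : i <= n.-2 by lia.
have Ej1 : tog T i j.+1 = T j.+1 by rewrite /tog gtn_eqF ?addbF //; lia.
have Ej0 : tog T i j = T j by rewrite /tog gtn_eqF ?addbF //; lia.
case Hc: [&& T j.+1, 0 < j & j <= n.-2]; last first.
  rewrite (sgen_nil (T := T) (i := j)) ?Hc // (sgen_nil (T := tog T i) (i := j)) ?Ej1 ?Hc // cats0 //.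
case/and3P: Hc => HTj1 Hj0 Hj2.
have [g0 [Hg0 ->]] := sgenE Hj0 Hj2 HTj1.
have HTj1' : tog T i j.+1 by rewrite Ej1.
have [g1 [Hg1 ->]] := sgenE Hj0 Hj2 HTj1'.
rewrite Ej0.
have Hr : (1 <= i < 1 + j.-1) && (1 <= i.+1 < 1 + j.-1) by apply/andP; split; apply/andP; split; lia.
case/andP: Hr => Hr1 Hr2.
have [h Hh] := mkgen (n := n) T Hi Hi2.
have Flow : filter (fun k => k < i) (filter T (iota 1 j.-1)) = filter T (iota 1 i.-1)
  by apply: filter_low; lia.
have Flow' : filter (fun k => k < i) (filter (tog T i) (iota 1 j.-1)) = filter T (iota 1 i.-1).
  rewrite filter_low; try lia; apply: filter_tog; exact: notin_iota_pred.
have Hij2 : i.+2 <= j by [].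
case HTi1: (T i.+1).
- have [h' [Hh' ->]] := sgenE Hi Hi2 HTi1.
  case HTi: (T i).
  + apply: conjL; apply: ge_rel; exists g0, g1, h', i; rewrite /= Hg0 /=; split => //.
    * by rewrite Hg1 (filter_pC1 _ HTi).
    * by rewrite Hh' Flow.
    * by right; rewrite !mem_filter !mem_iota Hr1 Hr2 HTi HTi1.
  + apply: conjR; apply: ge_rel; exists g1, g0, h', i; rewrite /= Hg1 /=; split => //.
    * by rewrite Hg0 (filter_pC1' _ (negbT HTi)).
    * by rewrite Hh' Flow'.
    * right; rewrite !mem_filter !mem_iota Hr1 Hr2 /tog eqxx HTi (gtn_eqF (ltnSn i)) HTi1.
      by split => //; split.
- rewrite (sgen_nil (T := T) (i := i)) ?HTi1 //= ?cats0.
  case HTi: (T i).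
  + have H : [:: (g0, false)] =b= [:: (g1, false)].
      apply: ge_rel; exists g0, g1, h, i; rewrite /= Hg0 /=; split => //.
      * by rewrite Hg1 (filter_pC1 _ HTi).
      * by rewrite Hh Flow.
      * by left; rewrite !mem_filter !mem_iota Hr1 Hr2 HTi HTi1.
    case: (T j); last exact: ge_sym.
    by apply: ge_sym; have := inv_letter H.
  + have H : [:: (g1, false)] =b= [:: (g0, false)].
      apply: ge_rel; exists g1, g0, h, i; rewrite /= Hg1 /=; split => //.
      * by rewrite Hg0 (filter_pC1' _ (negbT HTi)).
      * by rewrite Hh Flow'.
      * left; rewrite !mem_filter !mem_iota Hr1 Hr2 /tog eqxx HTi (gtn_eqF (ltnSn i)) HTi1.
        by split => //; split.
    case: (T j) => //.
    by have := inv_letter H.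
Qed.
End Key.

Section Key2.
Variable n : nat.
Local Notation "u =b= v" := (geqv (@RB n) u v) (at level 70).

Lemma idx_cat (u v : word (tw_gen n)) : idx (u ++ v) = idx u ++ idx v.
Proof. by rewrite /idx map_cat. Qed.

Lemma key u v : geqv (@RTW n) u v -> forall T,
  fin T (idx u) = fin T (idx v) /\ rho n T (idx u) =b= rho n T (idx v).
Proof.
elim => {u v}.
- by [].
- by move=> u v _ IH T; case: (IH T) => H1 H2; split; [rewrite H1 | apply: ge_sym].
- move=> u v w _ IH1 _ IH2 T; case: (IH1 T) => H1 H2; case: (IH2 T) => H3 H4.
  by split; [rewrite H1 | apply: ge_trans H4].
- move=> u u' v v' _ IH1 _ IH2 T; rewrite !idx_cat !fin_cat !rho_cat.
  case: (IH1 T) => H1 H2; rewrite -H1; case: (IH2 (fin T (idx u))) => H3 H4.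
  by split; [rewrite H3 | apply: ge_cat].
- move=> a b T; rewrite /idx /= /fin /= togK cats0; split => //; exact: sgen_cancel.
- move=> u v [[i [-> ->]] | [i [j [Hf [-> ->]]]]] T; rewrite /idx /= /fin /= ?cats0.
    by rewrite togK; split => //; exact: sgen_cancel.
  rewrite togC; split => //.
  case: i Hf => i /= Hi; case: j => j /= Hj; case=> Hij.
    by apply: sgen_comm => //; case/andP: Hi; case/andP: Hj.
  by apply: ge_sym; apply: sgen_comm => //; case/andP: Hi; case/andP: Hj.
Qed.
End Key2.

Lemma eqSn k : (k.+1 == k) = false.
Proof. exact: gtn_eqF. Qed.
Lemma eqSSn k : (k.+2 == k) = false.
Proof. by apply: gtn_eqF. Qed.

Section Norm.
Variable n : nat.
Local Notation Ft S := (flatten (map (tau n) S)).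
Definition T0 : nat -> bool := fun _ => false.
Definition unionS (T : nat -> bool) (S : seq nat) := fun k => T k || (k \in S).

Lemma idx_tau k : 0 < k < n -> idx (tau n k) = [:: k].
Proof. by move=> H; rewrite (tau_valid H). Qed.

Lemma idx_Ft S : all (fun k => 0 < k < n) S -> idx (Ft S) = S.
Proof.
elim: S => [|a S IH] //= /andP [Ha HS].
by rewrite idx_cat idx_tau // IH.
Qed.

Lemma idx_winv (u : word (tw_gen n)) : idx (winv u) = rev (idx u).
Proof. by rewrite /idx /winv map_rev -map_comp. Qed.

Lemma fwd S : forall (T : nat -> bool) m, (forall k, m <= k -> T k = false) ->
  sorted ltn S -> all (fun k => m <= k) S ->
  rho n T S = [::] /\ fin T S = unionS T S.
Proof.
elim: S => [|s S IH] T m HT Hs Hm.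
  by split => //; apply: functional_extensionality => k; rewrite /unionS orbF.
move: Hm => /= /andP [Hsm HSm].
have Hs' : sorted ltn S by move: Hs => /= /path_sorted.
have HsS := sorted_cons_all Hs.
have HT' : forall k, s.+1 <= k -> tog T s k = false.
  by move=> k Hk; rewrite /tog HT ?gtn_eqF //; apply: leq_trans Hsm _; apply: ltnW.
have [H1 H2] := IH (tog T s) s.+1 HT' Hs' HsS.
rewrite sgen_nil; last by rewrite (HT s.+1) //; exact: leq_trans Hsm (leqnSn s).
split; first by rewrite H1.
rewrite /fin /= -/(fin _ _) H2; apply: functional_extensionality => k.
rewrite /unionS /tog inE; case: eqP => [->|_]; last by rewrite addbF.
by rewrite HT.
Qed.

Lemma bwd S : forall (T : nat -> bool) m, (forall k, m <= k -> T k = false) ->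
  sorted ltn S -> all (fun k => m <= k) S ->
  rho n (unionS T S) (rev S) = [::] /\ fin (unionS T S) (rev S) = T.
Proof.
elim: S => [|s S IH] T m HT Hs Hm.
  by split => //; apply: functional_extensionality => k; rewrite /fin /unionS /= ?in_nil orbF.
move: Hm => /= /andP [Hsm HSm].
have Hs' : sorted ltn S by move: Hs => /= /path_sorted.
have HsS := sorted_cons_all Hs.
set T' := fun k => T k || (k == s).
have HT' : forall k, s.+1 <= k -> T' k = false.
  move=> k Hk; rewrite /T' (HT k); last by apply: leq_trans Hsm _; apply: ltnW.
  by rewrite gtn_eqF.
have [H1 H2] := IH T' s.+1 HT' Hs' HsS.
have EU : unionS T (s :: S) = unionS T' S.
  by apply: functional_extensionality => k; rewrite /unionS /T' inE orbA.
rewrite EU rev_cons -cats1 rho_cat fin_cat H1 H2 /=.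
have HTs : T s = false by apply: HT.
rewrite sgen_nil; last by rewrite /T' eqSn orbF HT //; apply: leq_trans Hsm _.
split => //; rewrite /fin /=; apply: functional_extensionality => k.
rewrite /tog /T'; case: eqP => [->|_]; last by rewrite orbF addbF.
by rewrite HTs.
Qed.

Lemma filter_S (S : seq nat) j : sorted ltn S -> all (fun k => 0 < k < j) S ->
  filter (unionS T0 S) (iota 1 j.-1) = S.
Proof.
move=> Hs HS; apply: (irr_sorted_eq ltn_trans ltnn).
  by apply: sorted_filter; [exact: ltn_trans | exact: iota_ltn_sorted].
by [].
move=> x; rewrite mem_filter /unionS /T0 /= mem_iota.
case Hx: (x \in S); last by [].
by have := allP HS x Hx => /andP [H1 H2] /=; apply/andP; split; [|lia].
Qed.

Lemma rho_beta (g : bgen n) :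
  rho n T0 (idx (beta g)) = [:: (g, false)] /\ fin T0 (idx (beta g)) = T0 /\
  rho n T0 (idx (winv (beta g))) = [:: (g, true)] /\ fin T0 (idx (winv (beta g))) = T0.
Proof.
case: g => [[S j] ok] /=.
case/and4P: (ok) => /= Hj0 Hj2 Hs HS.
have Hjn : j.+1 < n by lia.
have HSn : all (fun k => 0 < k < n) S.
  by apply/allP => k Hk; have := allP HS k Hk; lia.
have HSn' : all (fun k => 0 < k < n) (rev S) by rewrite all_rev.
have HS1 : all (fun k => 1 <= k) S by apply/allP => k Hk; have := allP HS k Hk; lia.
have Hm : forall k, 1 <= k -> T0 k = false by [].
have [F1 F2] := fwd Hm Hs HS1.
have [B1 B2] := bwd Hm Hs HS1.
have Hnot : forall k, j <= k -> (k \in S) = false.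
  move=> k Hk; apply/negbTE/negP => Hk'; have := allP HS k Hk'; lia.
have Nj := Hnot j (leqnn j).
have Nj1 := Hnot j.+1 (leqnSn j).
have Nj2 : (j.+2 \in S) = false by apply: Hnot; lia.
have Ntj : j \notin iota 1 j.-1 := notin_iota_pred j.
have Ntj1 : j.+1 \notin iota 1 j.-1 by apply: notin_iota_low; lia.
have FS := filter_S Hs HS.
have EG : forall g : bgen n, val g = (S, j) -> g = exist _ (S, j) ok.
  by move=> g Hg; apply: val_inj.
rewrite /beta /= /beta_word !idx_winv !idx_cat !idx_Ft // !idx_tau ?Hj0 //; try lia.
rewrite !rev_cat revK /= !rho_cat !fin_cat F1 F2 /=.
rewrite -/(fin _ _) -/(fin _ _).
have U1 : forall l, unionS T0 S l = (l \in S) by [].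
have EU : forall a b, a != b -> tog (tog (tog (tog (unionS T0 S) a) b) a) b = unionS T0 S.
  move=> a b Hab; apply: functional_extensionality => k; rewrite /tog.
  by case: (k == a); case: (k == b); case: (unionS T0 S k).
split; [|split; [|split]].
- rewrite ?cats0 -?catA.
  rewrite sgen_nil; last by rewrite U1 Nj2.
  have HU : tog (unionS T0 S) j.+1 j.+1 by rewrite /tog eqxx U1 Nj1.
  have [g' [Hg' ->]] := sgenE Hj0 Hj2 HU.
  have E1 : tog (unionS T0 S) j.+1 j = false by rewrite /tog (ltn_eqF (ltnSn j)) U1 Nj.
  rewrite E1.
  move: Hg'; rewrite !filter_tog // FS => /EG -> /=.
  rewrite sgen_nil; last by rewrite /tog ?eqSn ?eqSSn U1 Nj2.
  rewrite sgen_nil; last by rewrite /tog ?eqxx ?eqSn U1 Nj1.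
  by rewrite EU ?B1 // ?eqSn.
- by rewrite /fin /= EU -/(fin _ _) ?B2 // ?eqSn.
- rewrite ?cats0 -?catA.
  rewrite sgen_nil; last by rewrite U1 Nj1.
  rewrite sgen_nil; last by rewrite /tog ?eqSn ?eqSSn U1 Nj2.
  have HU : tog (tog (unionS T0 S) j) j.+1 j.+1 by rewrite /tog eqxx eqSn U1 Nj1.
  have [g' [Hg' ->]] := sgenE Hj0 Hj2 HU.
  have E1 : tog (tog (unionS T0 S) j) j.+1 j = true
    by rewrite /tog eqxx (ltn_eqF (ltnSn j)) U1 Nj.
  rewrite E1.
  move: Hg'; rewrite !filter_tog // FS => /EG -> /=.
  rewrite sgen_nil; last by rewrite /tog ?eqSn ?eqSSn U1 Nj2.
  by rewrite EU ?B1 // eq_sym ?eqSn.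
- by rewrite /fin /= EU -/(fin _ _) ?B2 // eq_sym ?eqSn.
Qed.
End Norm.

Section Final.
Variable n : nat.
Local Notation "u =t= v" := (geqv (@RTW n) u v) (at level 70).
Local Notation "u =b= v" := (geqv (@RB n) u v) (at level 70).
Local Notation Ft S := (flatten (map (tau n) S)).

Lemma normal (w : word (bgen n)) : rho n T0 (idx (ev w)) = w /\ fin T0 (idx (ev w)) = T0.
Proof.
elim: w => [|[g b] w [IH1 IH2]] //.
have [H1 [H2 [H3 H4]]] := rho_beta g.
rewrite /ev /= -/(ev _) idx_cat rho_cat fin_cat.
by case: b; rewrite ?H1 ?H2 ?H3 ?H4 IH1 IH2.
Qed.

Lemma part2 w1 w2 : ev w1 =t= ev w2 -> w1 =b= w2.
Proof.
move=> H; have [_ H'] := key H T0.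
by have [E1 _] := normal w1; have [E2 _] := normal w2; rewrite E1 E2 in H'.
Qed.

Definition MT (T : nat -> bool) := Ft (filter T (iota 1 n.-1)).

Lemma iota_split i m : 0 < i -> i <= m -> iota 1 m = iota 1 i.-1 ++ i :: iota i.+1 (m - i).
Proof.
move=> H1 H2.
have E : m = i.-1 + (m - i).+1 by lia.
rewrite {1}E iotaD (_ : 1 + i.-1 = i) //; lia.
Qed.

Lemma step (T : nat -> bool) i : 0 < i < n ->
  MT T ++ tau n i =t= ev (sgen n T i) ++ MT (tog T i).
Proof.
case/andP => Hi Hin.
have Him : i <= n.-1 by lia.
rewrite /MT (iota_split Hi Him) !filter_cat !Ft_cat.
rewrite (filter_tog _ (notin_iota_pred i)).
have Ht : i \notin iota i.+1 (n.-1 - i) by rewrite mem_iota; apply/negP; lia.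
rewrite /= (filter_tog _ Ht) /tog eqxx addbT.
set L := filter T (iota 1 i.-1).
have [Eq|Lt] : i = n.-1 \/ i < n.-1 by lia.
- have -> : n.-1 - i = 0 by lia.
  rewrite sgen_nil; last by apply/negP => /and3P [_ _ H]; lia.
  rewrite /= ?cats0.
  case: (T i) => /=; last by rewrite ?cats0.
  by rewrite ?cats0 -catA tauK cats0.
- have -> : n.-1 - i = (n.-1 - i.+1).+1 by lia.
  rewrite /=.
  set R := filter T (iota i.+2 (n.-1 - i.+1)).
  have HR : all (far i) R.
    apply/allP => k; rewrite mem_filter mem_iota => /andP [_ /andP [Hk _]].
    by rewrite /far; apply/orP; left.
  have Hi2 : i <= n.-2 by lia.
  case HTi1: (T i.+1).
  + have [h [Hh ->]] := sgenE Hi Hi2 HTi1.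
    rewrite /ev /= /beta Hh /= cats0.
    case: (T i) => /=.
    * rewrite winv_beta -!catA FtrevK tauKw.
      by rewrite -(FtC2 _ HR).
    * rewrite /beta_word -!catA FtrevK tauKw tauKw.
      by rewrite -(FtC2 _ HR).
  + rewrite sgen_nil; last by rewrite HTi1.
    case: (T i) => /=; rewrite -!catA -(FtC2 _ HR) //.
    by rewrite tauKw.
Qed.
End Final.

Section Final2.
Variable n : nat.
Local Notation "u =t= v" := (geqv (@RTW n) u v) (at level 70).
Local Notation Ft S := (flatten (map (tau n) S)).

Lemma Mw (u : word (tw_gen n)) : forall T,
  MT n T ++ u =t= ev (rho n T (idx u)) ++ MT n (fin T (idx u)).
Proof.
elim: u => [|[x b] u IH] T; first by rewrite /= cats0.
rewrite /idx /= -/(idx _) ev_cat.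
have -> : MT n T ++ (x, b) :: u = (MT n T ++ [:: (x, b)]) ++ u by rewrite -catA.
rewrite letter step; last exact: valP x.
by rewrite -catA IH catA.
Qed.

Lemma finE T s : fin T s = fun k => T k (+) odd (count_mem k s).
Proof.
elim: s T => [|a s IH] T.
  by apply: functional_extensionality => k; rewrite addbF.
rewrite /fin /= -/(fin _ _) IH; apply: functional_extensionality => k.
by rewrite /tog oddD oddb eq_sym addbA.
Qed.

Lemma fin_comm T ps :
  fin T (idx (flatten (map (fun p : word (tw_gen n) * word (tw_gen n) => wcomm p.1 p.2) ps))) = T.
Proof.
elim: ps T => [|[x y] ps IH] T //=.
rewrite idx_cat fin_cat IH finE; apply: functional_extensionality => k.
rewrite /wcomm !idx_cat !idx_winv !count_cat !count_rev.
set a := count _ (idx x); set b := count _ (idx y).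
by rewrite (_ : a + (b + (a + b)) = (a + b).*2) ?odd_double ?addbF //; rewrite -addnn; lia.
Qed.

Definition Cm (u : word (tw_gen n)) := in_commutator u.

Lemma Cm_nil : Cm [::].
Proof. by exists [::]. Qed.

Lemma Cm_cat u v : Cm u -> Cm v -> Cm (u ++ v).
Proof.
move=> [p1 H1] [p2 H2]; exists (p1 ++ p2).
by rewrite map_cat flatten_cat; apply: ge_cat.
Qed.

Lemma Cm_eq u v : u =t= v -> Cm v -> Cm u.
Proof. by move=> H [p Hp]; exists p; apply: ge_trans Hp. Qed.

Lemma Cm_conj X a b : Cm (X ++ wcomm (tau n a) (tau n b) ++ winv X).
Proof.
set c := wcomm (tau n a) (tau n b).
exists [:: (tau n a, tau n b); (c, winv X)] => /=.
rewrite /wcomm winvK -/c cats0.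
apply: ge_sym; rewrite /c; exact: cat_winvw.
Qed.

Lemma Cm_beta (g : bgen n) : Cm (beta g) /\ Cm (winv (beta g)).
Proof.
case: g => [[S j] ok]; rewrite /beta /=; split.
- apply: (Cm_eq _ (Cm_conj (Ft S) j.+1 j)).
  rewrite /beta_word /wcomm !winv_tau winv_Ft.
  by rewrite -!catA.
- apply: (Cm_eq _ (Cm_conj (Ft S) j j.+1)).
  rewrite winv_beta /wcomm !winv_tau winv_Ft.
  by rewrite -!catA.
Qed.

Lemma Cm_ev w : Cm (ev w).
Proof.
elim: w => [|[g b] w IH]; first exact: Cm_nil.
rewrite /ev /= -/(ev _); apply: Cm_cat => //.
by case: b; case: (Cm_beta g).
Qed.

Lemma MT0 : MT n T0 = [::].
Proof. by rewrite /MT /T0 filter_pred0. Qed.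
End Final2.

Theorem lemma3p3 (n : nat) (hn : (3 <= n)%N) :
  (forall w1 w2 : word (bgen n),
      geqv (@RB n) w1 w2 -> geqv (@RTW n) (ev w1) (ev w2)) /\
  (forall w1 w2 : word (bgen n),
      geqv (@RTW n) (ev w1) (ev w2) -> geqv (@RB n) w1 w2) /\
  (forall u : word (tw_gen n),
      in_commutator u <-> exists w : word (bgen n), geqv (@RTW n) u (ev w)).
Proof.
split; first exact: part1.
split; first exact: part2.
move=> u; split.
- move=> [ps Hps]; exists (rho n T0 (idx u)).
  have HM := Mw u T0.
  have [Hf _] := key Hps T0.
  rewrite Hf fin_comm MT0 cats0 /= in HM.
  exact: HM.
- move=> [w Hw]; exact: (Cm_eq Hw (Cm_ev w)).
Qed.
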